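(* Let $p\in[1,\infty)$, let $0 < \mathsf{D}_1 \le \mathsf{D}_2$ and $\mathsf{K}>0$ be reals, and let $x\in\{-\Delta,\dots,\Delta\}^d$ with $x\ne 0$. Let $u_1,\dots,u_d$ be independent $\mathrm{Exp}(1)$ random variables and, for $t\in\mathbb{R}$ and $\sigma\in\{-1,1\}$, let $G_{x,u}(t,\sigma)=\{i\in[d] : x_i\sigma/u_i^{1/p}\ge t\}$. Then $$\Pr_{u}\left[1 \le \Big|\bigcup_{\sigma\in\{-1,1\}} G_{x,u}\big(\|x\|_p/\mathsf{D}_1,\sigma\big)\Big| \le \Big|\bigcup_{\sigma\in\{-1,1\}} G_{x,u}\big(\|x\|_p/\mathsf{D}_2,\sigma\big)\Big| \le \mathsf{K}\right] \ge 1-\exp(-\mathsf{D}_1^p)-\frac{\mathsf{D}_2^p}{\mathsf{K}}.$$ In particular, for $\delta_2\in(0,1)$, $\mathsf{D}_1=\ln(2/\delta_2)^{1/p}$, $\mathsf{D}_2=2\mathsf{D}_1$ and $\mathsf{K}=2\mathsf{D}_2^p/\delta_2$, the probability is at least $1-\delta_2$.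
   Context: $\mathrm{Exp}(1)$ denotes the exponential distribution with rate $1$, i.e. $\Pr[u > a] = e^{-a}$ for $a\ge 0$. *)

(* Defs.v *)
From HB Require Import structures.
From mathcomp Require Import all_boot all_order all_algebra.
From mathcomp Require Import all_classical all_reals all_analysis.
Set Implicit Arguments. Unset Strict Implicit. Unset Printing Implicit Defensive.
Import Order.TTheory GRing.Theory Num.Theory.
Local Open Scope classical_set_scope.
Local Open Scope ring_scope.

Definition lpnorm {R : realType} (d : nat) (p : R) (x : 'I_d -> int) : R :=
  (\sum_(i < d) `|(x i)%:~R : R| `^ p) `^ p^-1.

Definition Gset {R : realType} (d : nat) (p : R) (x : 'I_d -> int)
  (u : 'I_d -> R) (t sigma : R) : {set 'I_d} :=
  [set i : 'I_d | t <= (x i)%:~R * sigma / (u i `^ p^-1)].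

Definition Gcard {R : realType} (d : nat) (p : R) (x : 'I_d -> int)
  (u : 'I_d -> R) (t : R) : nat :=
  #|Gset p x u t 1 :|: Gset p x u t (-1)|.

Definition good_event {R : realType} {T : Type} (d : nat) (p : R)
  (x : 'I_d -> int) (u : 'I_d -> T -> R) (D1 D2 K : R) : set T :=
  [set w | let uw := fun i => u i w in
     [/\ (1 <= Gcard p x uw (lpnorm p x / D1))%N,
         (Gcard p x uw (lpnorm p x / D1) <= Gcard p x uw (lpnorm p x / D2))%N
       & (Gcard p x uw (lpnorm p x / D2))%:R <= K]].

Definition is_exp1 {R : realType} {d0 : measure_display} {T : measurableType d0}
  (P : probability T R) (v : T -> R) : Prop :=
  measurable_fun [set: T] v /\
  forall a : R, 0 <= a -> P [set w | a < v w] = (expR (- a))%:E.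

Definition mutually_independent {R : realType} {d0 : measure_display}
  {T : measurableType d0} (P : probability T R) (d : nat) (u : 'I_d -> T -> R) : Prop :=
  forall (J : {set 'I_d}) (B : 'I_d -> set R),
    (forall i, measurable (B i)) ->
    P (\bigcap_(i in [set j | j \in J]) (u i @^-1` B i)) =
    (\prod_(i in J) P (u i @^-1` B i))%E.

(* Main.v *)
Require Import Defs.
From HB Require Import structures.
From mathcomp Require Import all_boot all_order all_algebra.
From mathcomp Require Import all_classical all_reals all_analysis measurable_realfun.
From mathcomp Require Import ring lra.
Import Order.TTheory GRing.Theory Num.Theory.
Local Open Scope classical_set_scope.
Local Open Scope ring_scope.

Section Helpers.
Context {R : realType}.

Lemma powR_le_eq (p a b : R) : 0 < p -> 0 <= a -> 0 <= b ->
  (a `^ p <= b `^ p) = (a <= b).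
Proof.
move=> p0 a0 b0; apply/idP/idP => [h|h]; last first.
  by apply: ge0_ler_powR => //; rewrite ?nnegrE // ltW.
rewrite leNgt; apply/negP => ba.
have := gt0_ltr_powR p0 (b0 : b \in Num.nneg) (a0 : a \in Num.nneg) ba.
by rewrite ltNge h.
Qed.

Lemma key_equiv (p t c v : R) : 0 < p -> 0 < t -> 0 <= c -> 0 < v ->
  (t <= c / v `^ p^-1) = (v <= c `^ p / t `^ p).
Proof.
move=> p0 t0 c0 v0.
have v1 : 0 < v `^ p^-1 by apply: powR_gt0.
have vv : (v `^ p^-1) `^ p = v.
  by rewrite -powRrM mulVf ?gt_eqF // powRr1 // ltW.
rewrite ler_pdivlMr //.
have tv0 : 0 <= t * v `^ p^-1 by rewrite mulr_ge0 // ltW.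
rewrite -(@powR_le_eq p (t * v `^ p^-1) c p0 tv0 c0).
rewrite powRM ?(ltW t0) ?(ltW v1) // vv.
by rewrite [in RHS]ler_pdivlMr ?powR_gt0 // mulrC.
Qed.

Lemma or_le_abs (t a : R) : 0 < t -> (t <= a) || (t <= - a) = (t <= `|a|).
Proof.
move=> t0; have [a0|a0] := leP 0 a.
  rewrite ger0_norm //; case: (t <= a) => //=.
  by apply/negbTE; rewrite -ltNge (le_lt_trans _ t0) // oppr_le0.
rewrite ltr0_norm //; have -> : (t <= a) = false.
  by apply/negbTE; rewrite -ltNge (lt_trans a0 t0).
by [].
Qed.


Lemma mem_G (p : R) d (x : 'I_d -> int) (u : 'I_d -> R) t i :
  0 < p -> 0 < t -> 0 < u i ->
  (i \in Gset p x u t 1 :|: Gset p x u t (-1)) =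
  (u i <= `|(x i)%:~R : R| `^ p / t `^ p).
Proof.
move=> p0 t0 ui0; rewrite !inE mulr1 mulrN1 mulNr or_le_abs //.
rewrite normrM normfV (gtr0_norm (powR_gt0 _ ui0)).
by apply: key_equiv.
Qed.

Lemma sum_pos d (p : R) (x : 'I_d -> int) : 0 < p -> (exists i, x i != 0) ->
  0 < \sum_(i < d) `|(x i)%:~R : R| `^ p.
Proof.
move=> p0 [i0 xi0]; rewrite (bigD1 i0) //=.
apply: ltr_wpDr; first by apply: sumr_ge0 => i _; exact: powR_ge0.
by apply: powR_gt0; rewrite normr_gt0 intr_eq0.
Qed.

Lemma lpnorm_gt0 d (p : R) (x : 'I_d -> int) : 0 < p -> (exists i, x i != 0) ->
  0 < lpnorm p x.
Proof. by move=> p0 hx; apply: powR_gt0; apply: sum_pos. Qed.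

Lemma sum_a d (p : R) (x : 'I_d -> int) D : 0 < p -> 0 < D ->
  (exists i, x i != 0) ->
  \sum_(i < d) (`|(x i)%:~R : R| `^ p / (lpnorm p x / D) `^ p) = D `^ p.
Proof.
move=> p0 D0 hx.
have S0 := @sum_pos d p x p0 hx.
have N0 := @lpnorm_gt0 d p x p0 hx.
have T0 : 0 < (lpnorm p x / D) `^ p by apply: powR_gt0; rewrite divr_gt0.
rewrite -mulr_suml.
have -> : \sum_(i < d) `|(x i)%:~R : R| `^ p = (lpnorm p x / D) `^ p * D `^ p.
  rewrite -powRM ?ltW ?divr_gt0 // divfK ?gt_eqF //.
  by rewrite /lpnorm -powRrM mulVf ?gt_eqF // powRr1 // ltW.
by rewrite mulrAC divff ?mul1r // gt_eqF.
Qed.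

End Helpers.

Section MeasHelpers.
Context {R : realType} {d0 : measure_display} {T : measurableType d0}.

Lemma meas_pattern (I : finType) (f : T -> I -> bool) (F : set T) :
  (forall i, measurable [set w | f w i]) ->
  (forall w w', (forall i, f w i = f w' i) -> F w -> F w') -> measurable F.
Proof.
move=> mf hF.
have -> : F = \bigcup_(g in [set g : {ffun I -> bool} |
    exists2 w, F w & forall i, f w i = g i])
    \bigcap_(i in [set: I]) [set w | f w i = g i].
  apply/seteqP; split => [w Fw|w [g [w' Fw' hw'] hg]].
  - exists [ffun i => f w i]; first by exists w => // i; rewrite ffunE.
    by move=> i _ /=; rewrite ffunE.
  - apply: (hF w') => // i; rewrite hw'; apply/esym; exact: hg.
apply: fin_bigcup_measurable; first exact: finite_finset.
move=> g _; apply: fin_bigcap_measurable; first exact: finite_finset.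
move=> i _; case: (g i); first exact: mf.
have -> : [set w | f w i = false] = ~` [set w | f w i].
  by apply/seteqP; split => w /=; case: (f w i).
exact/measurableC/mf.
Qed.

Lemma preim_meas (v : T -> R) (B : set R) :
  measurable_fun setT v -> measurable B -> measurable (v @^-1` B).
Proof. by move=> mv mB; have := mv measurableT B mB; rewrite setTI. Qed.

Lemma meas_ge_div (t c q : R) : measurable [set r : R | t <= c / r `^ q].
Proof.
have -> : [set r : R | t <= c / r `^ q] =
    (fun r => c * r `^ (- q)) @^-1` `[t, +oo[.
  by apply/seteqP; split => r /=; rewrite in_itv /= andbT powRN.
have mf : measurable_fun setT (fun r : R => c * r `^ (- q)).
  exact: (measurable_funM (measurable_cst _) (measurable_powR _)).
have := mf measurableT _ (measurable_itv `[t, +oo[).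
by rewrite setTI.
Qed.

End MeasHelpers.

Lemma card_sum_ind {R : realType} d (P : pred 'I_d) :
  (#|[set i : 'I_d | P i]%SET|)%:R = \sum_(i < d) ((P i)%:R : R).
Proof.
rewrite -sum1_card natr_sum big_mkcond /=; apply: eq_bigr => i _.
by rewrite inE; case: (P i).
Qed.

Theorem mainTheorem4 (R : realType) (p : R) (Delta d : nat) (x : 'I_d -> int)
  (d0 : measure_display) (T : measurableType d0) (P : probability T R)
  (u : 'I_d -> T -> R) :
  1 <= p ->
  (forall i, `|x i| <= Delta%:Z) ->
  (exists i, x i != 0) ->
  (forall i, is_exp1 P (u i)) ->
  mutually_independent P u ->
  (forall D1 D2 K : R, 0 < D1 -> D1 <= D2 -> 0 < K ->
     ((1 - expR (- (D1 `^ p)) - D2 `^ p / K)%:E <= P (good_event p x u D1 D2 K))%E)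
  /\
  (forall delta2 : R, 0 < delta2 < 1 ->
     let D1 := ln (2 / delta2) `^ p^-1 in
     let D2 := 2 * D1 in
     let K := 2 * D2 `^ p / delta2 in
     ((1 - delta2)%:E <= P (good_event p x u D1 D2 K))%E).
Proof.
move=> p1 _ hx hexp hind.
have p0 : 0 < p by apply: (lt_le_trans ltr01 p1).
have mu i : measurable_fun setT (u i) by case: (hexp i).
have part1 : forall D1 D2 K : R, 0 < D1 -> D1 <= D2 -> 0 < K ->
     ((1 - expR (- (D1 `^ p)) - D2 `^ p / K)%:E <= P (good_event p x u D1 D2 K))%E.
  move=> D1 D2 K D10 D12 K0.
  have D20 : 0 < D2 := lt_le_trans D10 D12.
  have N0 := @lpnorm_gt0 _ d p x p0 hx.
  pose a (i : 'I_d) (t : R) := `|(x i)%:~R : R| `^ p / t `^ p.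
  have a0 i t : 0 <= a i t by rewrite divr_ge0 // powR_ge0.
  pose t1 := lpnorm p x / D1; pose t2 := lpnorm p x / D2.
  have t10 : 0 < t1 by rewrite divr_gt0.
  have t20 : 0 < t2 by rewrite divr_gt0.
  have t21 : t2 <= t1 by rewrite /t1 /t2 ler_pM2l // lef_pV2 // posrE.
  pose Opos := \bigcap_(i in [set j | j \in [set: 'I_d]%SET]) (u i @^-1` `]0, +oo[).
  pose Z := \bigcap_(i in [set j | j \in [set: 'I_d]%SET]) (u i @^-1` `]a i t1, +oo[).
  pose A i := u i @^-1` `]-oo, a i t2].
  pose W := [set w | K < \sum_(i < d) ((u i w <= a i t2)%R%:R : R)].
  have preim_oo i c : u i @^-1` `]c, +oo[ = [set w | c < u i w].
    by apply/seteqP; split => w /=; rewrite in_itv /= andbT.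
  have mA i : measurable (A i) := preim_meas _ _ (mu i) (measurable_itv _).
  have mOpos : measurable Opos.
    apply: fin_bigcap_measurable; first exact: finite_finset.
    by move=> i _; exact: preim_meas _ _ (mu i) (measurable_itv _).
  have mZ : measurable Z.
    apply: fin_bigcap_measurable; first exact: finite_finset.
    by move=> i _; exact: preim_meas _ _ (mu i) (measurable_itv _).
  have indA i w : \1_(A i) w = (u i w <= a i t2)%R%:R.
    rewrite indicE; suff -> : (w \in A i) = (u i w <= a i t2) by [].
    apply/idP/idP => [/set_mem|h].
      by rewrite /A /= in_itv.
    by apply: mem_set; rewrite /A /= in_itv.
  have mW : measurable W.
    apply: (@meas_pattern _ _ _ (fun w i => u i w <= a i t2)).
      move=> i; have -> : [set w | u i w <= a i t2] = A i.
        by apply/seteqP; split => w; rewrite /A /= in_itv.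
      exact: mA.
    move=> w w' h; rewrite /W /=.
    have -> : \sum_(i < d) ((u i w' <= a i t2)%R%:R : R) =
              \sum_(i < d) ((u i w <= a i t2)%R%:R : R).
      by apply: eq_bigr => i _; rewrite h.
    by [].
  pose G (t : R) w := Gset p x (fun j => u j w) t 1 :|: Gset p x (fun j => u j w) t (-1).
  have mG t i : measurable [set w | i \in G t w].
    have -> : [set w | i \in G t w] = u i @^-1`
        ([set r | t <= (x i)%:~R * 1 / r `^ p^-1] `|`
         [set r | t <= (x i)%:~R * -1 / r `^ p^-1]).
      apply/seteqP; split => w /=; rewrite !inE.
        by move=> /orP[h|h]; [left|right].
      by move=> [h|h]; apply/orP; [left|right].
    apply: preim_meas _ _ (mu i) _.
    exact: measurableU (meas_ge_div _ _ _) (meas_ge_div _ _ _).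
  have mF : measurable (good_event p x u D1 D2 K).
    apply: (@meas_pattern _ _ ('I_d + 'I_d)%type
      (fun w j => match j with inl i => i \in G t1 w | inr i => i \in G t2 w end)).
      by case => i; apply: mG.
    move=> w w' h.
    have e1 : G t1 w' = G t1 w by apply/setP => i; have := h (inl i).
    have e2 : G t2 w' = G t2 w by apply/setP => i; have := h (inr i).
    rewrite /good_event /Gcard /=.
    by rewrite -/(G t1 w') -/(G t2 w') -/(G t1 w) -/(G t2 w) e1 e2.
  have cover : ~` good_event p x u D1 D2 K `<=` (~` Opos `|` Z) `|` W.
    move=> w nF; case: (pselect (Opos w)) => Ow; last by left; left.
    have upos i : 0 < u i w.
      have hi : [set j | j \in [set: 'I_d]%SET] i.
        by rewrite /= inE.
      have := Ow i hi.
      by rewrite /= in_itv /= andbT.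
    have cardG t : 0 < t -> #|G t w| = #|[set i | u i w <= a i t]%SET|.
      by move=> t0; apply: eq_card => i; rewrite mem_G // inE.
    have c12 : (#|G t1 w| <= #|G t2 w|)%N.
      apply: subset_leq_card; apply/fintype.subsetP => i; rewrite !inE.
      by move=> /orP[h|h]; apply/orP; [left|right]; exact: le_trans t21 h.
    have [h1|h1] := boolP (1 <= #|G t1 w|)%N.
      right; rewrite /W /=.
      rewrite -card_sum_ind -cardG // ltNge; apply/negP => h3; apply: nF.
      by rewrite /good_event /Gcard /=; split.
    left; right => i _ /=; rewrite in_itv /= andbT ltNge.
    move: h1; rewrite cardG // lt0n negbK cards_eq0 => /eqP hs.
    have : i \notin [set i | u i w <= a i t1]%SET by rewrite hs inE.
    by rewrite inE.
  have PO : P Opos = 1%E.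
    rewrite /Opos (hind [set: 'I_d]%SET (fun=> `]0, +oo[%classic)); last first.
      by move=> i; exact: measurable_itv.
    rewrite big1 // => i _; rewrite preim_oo ((hexp i).2 0 (lexx 0)).
    by rewrite oppr0 expR0.
  have PZ : P Z = (expR (- D1 `^ p))%:E.
    rewrite /Z (hind [set: 'I_d]%SET (fun i => `]a i t1, +oo[%classic)); last first.
      by move=> i; exact: measurable_itv.
    under eq_bigr => i _ do rewrite preim_oo ((hexp i).2 _ (a0 i t1)).
    rewrite prodEFin -expR_sum sumrN.
    rewrite (eq_bigl (fun _ => true)); last by move=> i; rewrite inE.
    by rewrite (@sum_a _ d p x D1 p0 D10 hx).
  have PA i : P (A i) = (1 - expR (- a i t2))%:E.
    have -> : A i = ~` (u i @^-1` `]a i t2, +oo[).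
      by apply/seteqP; split => w; rewrite /A /= !in_itv /= ?andbT leNgt => h; exact/negP.
    rewrite probability_setC; last exact: preim_meas _ _ (mu i) (measurable_itv _).
    by rewrite preim_oo ((hexp i).2 _ (a0 i t2)) EFinB.
  have PW : (P W <= (D2 `^ p / K)%:E)%E.
    have e1 : (\int[P]_(w in setT) (K * \1_W w)%:E = K%:E * P W)%E.
      rewrite (integralZl_indic _ (fun=> W)) //; last first.
        by move=> /(lt_trans K0); rewrite ltxx.
      by rewrite integral_indic // setIT.
    have e2 : (\int[P]_(w in setT) (\sum_(i < d) (\1_(A i) w)%:E) =
               \sum_(i < d) P (A i))%E.
      rewrite ge0_integral_sum.
      - by apply: eq_bigr => i _; rewrite integral_indic // setIT.
      - by [].
      - by move=> i; apply/measurable_EFinP; exact: measurable_indic.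
      - by move=> i w _; rewrite lee_fin indicE ler0n.
    have le12 : (\int[P]_(w in setT) (K * \1_W w)%:E <=
                 \int[P]_(w in setT) (\sum_(i < d) (\1_(A i) w)%:E))%E.
      apply: ge0_le_integral => //.
      - by move=> w _; rewrite lee_fin mulr_ge0 // ?indicE ?ler0n // ltW.
      - apply/measurable_EFinP; apply: measurable_funM.
          exact: measurable_cst.
        exact: measurable_indic.
      - by apply: emeasurable_sum => i; apply/measurable_EFinP; exact: measurable_indic.
      - move=> w _; rewrite sumEFin lee_fin.
        under eq_bigr => i _ do rewrite indA.
        case: (pselect (W w)) => hw.
          by rewrite indicE mem_set // mulr1; apply: ltW.
        by rewrite indicE memNset // mulr0; apply: sumr_ge0 => i _; exact: ler0n.
    have key : (K%:E * P W <= (D2 `^ p)%:E)%E.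
      rewrite -e1; apply: (le_trans le12); rewrite e2.
      under eq_bigr => i _ do rewrite PA.
      rewrite sumEFin lee_fin -(@sum_a _ d p x D2 p0 D20 hx).
      apply: ler_sum => i _.
      have := expR_ge1Dx (- a i t2); rewrite /a /t2; lra.
    by rewrite mulrC EFinM lee_pdivlMl.
  have mOZ : measurable (~` Opos `|` Z) by apply: measurableU => //; exact: measurableC.
  have mU : measurable ((~` Opos `|` Z) `|` W) by exact: measurableU.
  have hb : (P (~` good_event p x u D1 D2 K) <=
             (expR (- D1 `^ p) + D2 `^ p / K)%:E)%E.
    apply: (le_trans (le_measure _ (mem_set (measurableC mF)) (mem_set mU) cover)).
    apply: (le_trans (measureU2 _ mOZ mW)).
    rewrite EFinD; apply: leeD => //.
    apply: (le_trans (measureU2 _ (measurableC mOpos) mZ)).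
    have hO : P (~` Opos) = 0%E by rewrite probability_setC // PO subee.
    rewrite -[X in (_ <= X)%E]add0e; apply: leeD.
      by rewrite -hO.
    by rewrite -PZ.
  rewrite -(setCK (good_event p x u D1 D2 K)) probability_setC; last exact: measurableC.
  apply: le_trans (leeB (lexx 1%E) hb).
  by rewrite -EFinB opprD addrA.
split; first exact: part1.
move=> del /andP[del0 del1] /=.
set D1 := ln (2 / del) `^ p^-1. set D2 := 2 * D1. set K := 2 * D2 `^ p / del.
have l0 : 0 < ln (2 / del).
  by apply: ln_gt0; rewrite ltr_pdivlMr // mul1r; lra.
have D10 : 0 < D1 by rewrite /D1 powR_gt0.
have D1p : D1 `^ p = ln (2 / del).
  by rewrite /D1 -powRrM mulVf ?gt_eqF // powRr1 // ltW.
have D2p0 : 0 < D2 `^ p by apply: powR_gt0; rewrite /D2 mulr_gt0.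
have K0 : 0 < K by rewrite /K divr_gt0 // mulr_gt0.
have D12 : D1 <= D2 by rewrite /D2; lra.
apply: le_trans (part1 D1 D2 K D10 D12 K0); rewrite lee_fin D1p.
rewrite expRN lnK ?posrE ?divr_gt0 // invf_div.
have -> : D2 `^ p / K = del / 2.
  have h1 : D2 `^ p != 0 by rewrite gt_eqF.
  have h2 : del != 0 by rewrite gt_eqF.
  by rewrite /K; field; rewrite h1 h2.
lra.
Qed.
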